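(* Let $E_{\mathrm{out}}$ be a lazy expression, $\mathcal L$ a finite family of nonempty polyhedra in $\mathbb{R}^n$, and assign to each $C\in\mathcal L$ numbers $\ell_C\le\inf_C[\![E_{\mathrm{out}}]\!]$ and $u_C\ge\sup_C[\![E_{\mathrm{out}}]\!]$; define $\underline A(x)=\sup\{\ell_C: C\in\mathcal L,\,x\in C\}$ and $\overline A(x)=\inf\{u_C: C\in\mathcal L,\,x\in C\}$ ($\sup\emptyset=-\infty$, $\inf\emptyset=+\infty$). (i) Suppose all $\ell_C=\mathrm{LB}(E_{\mathrm{out}},C)$, $u_C=\mathrm{UB}(E_{\mathrm{out}},C)$, and let $\mathcal L'$ be obtained by replacing some $C\in\mathcal L$ by those of $C\cap\{a^\top x\le d\}$ and $C\cap\{a^\top x\ge d\}$ that are nonempty (for some $a\in\mathbb{R}^n$, $d\in\mathbb{R}$), with the children's numbers again given by $\mathrm{LB}$ and $\mathrm{UB}$. (ii) Alternatively, let the new data be obtained by replacing some $\ell_C$ by a larger value still $\le\inf_C[\![E_{\mathrm{out}}]\!]$, or some $u_C$ by a smaller value still $\ge\sup_C[\![E_{\mathrm{out}}]\!]$. In either case the new envelopes $\underline A',\overline A'$ satisfy $\underline A'(x)\ge\underline A(x)$ and $\overline A'(x)\le\overline A(x)$ for all $x\in\mathbb{R}^n$, and $\underline A'\le[\![E_{\mathrm{out}}]\!]\le\overline A'$ still holds.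
   Context: Lazy (scalar) expressions are generated by $E::=\mathtt{Affine}(w,b)\mid\mathtt{Sum}(\{E_i\})\mid\mathtt{Max}(\{E_i\})\mid\mathtt{Scale}(c,E)\mid\mathtt{Bias}(b,E)$ with denotations $[\![\mathtt{Affine}(w,b)]\!](x)=w^\top x+b$, $[\![\mathtt{Sum}]\!]=$ sum, $[\![\mathtt{Max}]\!]=$ pointwise max, $[\![\mathtt{Scale}(c,E)]\!]=c[\![E]\!]$, $[\![\mathtt{Bias}(b,E)]\!]=[\![E]\!]+b$. A polyhedron is a finite intersection of closed halfspaces. Bounds on a nonempty polyhedron $C$ (values in $\mathbb{R}\cup\{\pm\infty\}$, $0\cdot(\pm\infty)=0$): $\mathrm{LB}(\mathtt{Affine}(w,b),C)=\inf_C(w^\top x+b)$, $\mathrm{UB}(\mathtt{Affine}(w,b),C)=\sup_C(w^\top x+b)$; $\mathtt{Sum}$: sums of children's bounds; $\mathtt{Scale}(c,E)$: $(c\,\mathrm{LB},c\,\mathrm{UB})$ if $c\ge0$, $(c\,\mathrm{UB},c\,\mathrm{LB})$ if $c<0$; $\mathtt{Bias}(b,E)$: bounds shifted by $b$; $\mathtt{Max}$: maxima of children's $\mathrm{LB}$ and of their $\mathrm{UB}$. *)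

(* Defs.v *)
From HB Require Import structures.
From mathcomp Require Import all_boot all_order all_algebra.
From mathcomp Require Import all_classical all_reals ereal.
From Stdlib Require List.
Set Implicit Arguments. Unset Strict Implicit. Unset Printing Implicit Defensive.
Import Order.TTheory GRing.Theory Num.Theory.
Local Open Scope ring_scope.
Local Open Scope classical_set_scope.

Section Lazy.
Variables (R : realType) (n : nat).

Definition dot (w x : 'rV[R]_n) : R := \sum_(i < n) w 0 i * x 0 i.

(* Lazy expressions.  Max takes a nonempty family (head + tail). *)
Inductive lexpr : Type :=
| Affine of 'rV[R]_n & R
| Sum of seq lexpr
| Max of lexpr & seq lexpr
| Scale of R & lexpr
| Bias of R & lexpr.

Fixpoint lsem (E : lexpr) (x : 'rV[R]_n) {struct E} : R :=
  match E with
  | Affine w b => dot w x + b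
  | Sum es =>
      (fix sumf (l : seq lexpr) : R :=
         match l with [::] => 0 | e :: l' => lsem e x + sumf l' end) es
  | Max e es =>
      (fix mx (l : seq lexpr) : R :=
         match l with [::] => lsem e x | e' :: l' => Num.max (lsem e' x) (mx l') end) es
  | Scale c e => c * lsem e x
  | Bias b e => lsem e x + b
  end.

(* A polyhedron: finite list of constraints (a, d) meaning a^T x <= d. *)
Definition inpoly (P : seq ('rV[R]_n * R)) (x : 'rV[R]_n) : bool :=
  all (fun c => dot c.1 x <= c.2) P.

Definition poly_set (P : seq ('rV[R]_n * R)) : set 'rV[R]_n := [set x | inpoly P x].

Fixpoint bnds (E : lexpr) (C : set 'rV[R]_n) {struct E} : \bar R * \bar R :=
  match E with
  | Affine w b => (ereal_inf [set ((dot w x + b)%:E) | x in C],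
                   ereal_sup [set ((dot w x + b)%:E) | x in C])
  | Sum es =>
      (fix sumf (l : seq lexpr) : \bar R * \bar R :=
         match l with
         | [::] => (0%E, 0%E)
         | e :: l' => ((bnds e C).1 + (sumf l').1, (bnds e C).2 + (sumf l').2)%E
         end) es
  | Max e es =>
      (fix mx (l : seq lexpr) : \bar R * \bar R :=
         match l with
         | [::] => bnds e C
         | e' :: l' => (maxe (bnds e' C).1 (mx l').1, maxe (bnds e' C).2 (mx l').2)
         end) es
  | Scale c e =>
      if 0 <= c then ((c%:E * (bnds e C).1)%E, (c%:E * (bnds e C).2)%E)
      else ((c%:E * (bnds e C).2)%E, (c%:E * (bnds e C).1)%E)
  | Bias b e => ((bnds e C).1 + b%:E, (bnds e C).2 + b%:E)%E
  end.

Definition LB (E : lexpr) (C : set 'rV[R]_n) : \bar R := (bnds E C).1.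
Definition UB (E : lexpr) (C : set 'rV[R]_n) : \bar R := (bnds E C).2.

(* an element of the family L: a polyhedron C with numbers l_C, u_C *)
Record entry := Entry { cons : seq ('rV[R]_n * R); lo : \bar R; hi : \bar R }.

Definition valid_entry (E : lexpr) (e : entry) : Prop :=
  poly_set (cons e) !=set0 /\
  (lo e <= ereal_inf [set (lsem E x)%:E | x in poly_set (cons e)])%E /\
  (ereal_sup [set (lsem E x)%:E | x in poly_set (cons e)] <= hi e)%E.

Definition valid (E : lexpr) (L : seq entry) : Prop :=
  forall e, List.In e L -> valid_entry E e.

Definition Alo (L : seq entry) (x : 'rV[R]_n) : \bar R :=
  \big[maxe/-oo%E]_(e <- L | inpoly (cons e) x) lo e.
Definition Ahi (L : seq entry) (x : 'rV[R]_n) : \bar R :=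
  \big[mine/+oo%E]_(e <- L | inpoly (cons e) x) hi e.

Definition exact_entry (E : lexpr) (P : seq ('rV[R]_n * R)) : entry :=
  Entry P (LB E (poly_set P)) (UB E (poly_set P)).

(* case (i): all numbers are LB/UB, and one member C is split by a^T x <= d / a^T x >= d,
   keeping the nonempty children (with exact LB/UB numbers) *)
Definition split_step (E : lexpr) (L L' : seq entry) : Prop :=
  (forall e, List.In e L -> lo e = LB E (poly_set (cons e)) /\ hi e = UB E (poly_set (cons e))) /\
  exists (L1 L2 : seq entry) (e : entry) (a : 'rV[R]_n) (d : R),
    L = L1 ++ e :: L2 /\
    L' = L1 ++ [seq c <- [:: exact_entry E ((a, d) :: cons e);
                             exact_entry E ((- a, - d) :: cons e)]
                | `[< poly_set (cons c) !=set0 >]] ++ L2.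

Definition tighten_step (E : lexpr) (L L' : seq entry) : Prop :=
  exists (L1 L2 : seq entry) (e e' : entry),
    L = L1 ++ e :: L2 /\ L' = L1 ++ e' :: L2 /\ cons e' = cons e /\
    ((hi e' = hi e /\ (lo e <= lo e')%E /\
      (lo e' <= ereal_inf [set (lsem E x)%:E | x in poly_set (cons e)])%E) \/
     (lo e' = lo e /\ (hi e' <= hi e)%E /\
      (ereal_sup [set (lsem E x)%:E | x in poly_set (cons e)] <= hi e')%E)).

End Lazy.

(* Main.v *)
Require Import Defs.
From HB Require Import structures.
From mathcomp Require Import all_boot all_order all_algebra.
From mathcomp Require Import all_classical all_reals ereal.
From Stdlib Require List.
Import Order.TTheory GRing.Theory Num.Theory.
Local Open Scope ring_scope.
Local Open Scope classical_set_scope.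

Set Implicit Arguments. Unset Strict Implicit.
Section Aux.
Variables (R : realType) (n : nat).
Local Open Scope classical_set_scope.
Local Open Scope ereal_scope.

Lemma nmul_le (c : R) (a b : \bar R) : (c < 0)%R -> a <= b -> c%:E * b <= c%:E * a.
Proof.
move=> c0 ab; rewrite -(opprK c) EFinN !mulNe leeN2.
by apply: lee_wpmul2l => //; rewrite lee_fin oppr_ge0 ltW.
Qed.

Lemma lexpr_ind2 (P : lexpr R n -> Prop)
  (HA : forall w b, P (Affine w b))
  (HS0 : P (Sum [::])) (HS : forall e l, P e -> P (Sum l) -> P (Sum (e :: l)))
  (HM0 : forall e, P e -> P (Max e [::]))
  (HM : forall e e' l, P (Max e l) -> P e' -> P (Max e (e' :: l)))
  (HSc : forall c e, P e -> P (Scale c e))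
  (HB : forall b e, P e -> P (Bias b e)) : forall E, P E.
Proof.
fix F 1 => E; case: E => [w b|l|e l|c e|b e].
- exact: HA.
- elim: l => [|e l IH]; first exact: HS0.
  exact: HS (F e) IH.
- elim: l => [|e' l IH]; first exact: HM0 (F e).
  exact: HM IH (F e').
- exact: HSc (F e).
- exact: HB (F e).
Qed.

Lemma bnds_mono (C C' : set 'rV[R]_n) : C' `<=` C -> forall E : lexpr R n,
  (bnds E C).1 <= (bnds E C').1 /\ (bnds E C').2 <= (bnds E C).2.
Proof.
move=> sub; apply: lexpr_ind2.
- move=> w b /=; split.
    by apply: le_ereal_inf; apply: image_subset.
  by apply: ereal_sup_le; apply: image_subset.
- by [].
- move=> e l [h1 h2] [h3 h4] /=; split; exact: leeD.
- by [].
- move=> e e' l [h1 h2] [h3 h4] /=; split.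
  + rewrite ge_max !le_max h3 h1 orbT; done.
  + rewrite ge_max !le_max h2 h4 orbT; done.
- move=> c e [h1 h2] /=; case: ifP => c0 /=.
  + by split; apply: lee_wpmul2l => //; rewrite lee_fin.
  + have c0' : (c < 0)%R by rewrite ltNge c0.
    by split; apply: nmul_le.
- move=> b e [h1 h2] /=; split; exact: leeD.
Qed.

Lemma bnds_sound (C : set 'rV[R]_n) x : C x -> forall E : lexpr R n,
  (bnds E C).1 <= (lsem E x)%:E /\ (lsem E x)%:E <= (bnds E C).2.
Proof.
move=> Cx; apply: lexpr_ind2.
- move=> w b /=; split.
    by apply: ereal_inf_lbound; exists x.
  by apply: ereal_sup_ubound; exists x.
- by [].
- move=> e l [h1 h2] [h3 h4] /=; rewrite EFinD; split; exact: leeD.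
- by [].
- move=> e e' l [h1 h2] [h3 h4] /=; rewrite EFin_max; split.
  + rewrite ge_max !le_max h3 h1 orbT; done.
  + rewrite ge_max !le_max h2 h4 orbT; done.
- move=> c e [h1 h2] /=; rewrite EFinM; case: ifP => c0 /=.
  + by split; apply: lee_wpmul2l => //; rewrite lee_fin.
  + have c0' : (c < 0)%R by rewrite ltNge c0.
    by split; apply: nmul_le.
- move=> b e [h1 h2] /=; rewrite EFinD; split; exact: leeD.
Qed.

Lemma Alo_ub (L : seq (entry R n)) x y :
  (forall e, List.In e L -> inpoly (cons e) x -> lo e <= y) -> Alo L x <= y.
Proof.
rewrite /Alo; elim: L => [|e L IH] H; first by rewrite big_nil leNye.
rewrite big_cons; case: ifP => hx.
  rewrite ge_max H /= ?IH //; first by move=> e' he'; apply: H; right.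
  by left.
by apply: IH => e' he'; apply: H; right.
Qed.

Lemma Alo_lb (L : seq (entry R n)) x e :
  List.In e L -> inpoly (cons e) x -> lo e <= Alo L x.
Proof.
rewrite /Alo; elim: L => [|e0 L IH] //= [->|he] hx; rewrite big_cons.
  by rewrite hx le_max lexx.
case: ifP => _; last exact: IH.
by rewrite le_max IH ?orbT.
Qed.

Lemma Ahi_lb (L : seq (entry R n)) x y :
  (forall e, List.In e L -> inpoly (cons e) x -> y <= hi e) -> y <= Ahi L x.
Proof.
rewrite /Ahi; elim: L => [|e L IH] H; first by rewrite big_nil leey.
rewrite big_cons; case: ifP => hx.
  rewrite le_min H /= ?IH //; first by move=> e' he'; apply: H; right.
  by left.
by apply: IH => e' he'; apply: H; right.
Qed.

Lemma Ahi_ub (L : seq (entry R n)) x e :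
  List.In e L -> inpoly (cons e) x -> Ahi L x <= hi e.
Proof.
rewrite /Ahi; elim: L => [|e0 L IH] //= [->|he] hx; rewrite big_cons.
  by rewrite hx ge_min lexx.
case: ifP => _; last exact: IH.
by rewrite ge_min IH ?orbT.
Qed.

Lemma dotN (a x : 'rV[R]_n) : dot (- a) x = (- dot a x)%R.
Proof.
by rewrite /dot -sumrN; apply: eq_bigr => i _; rewrite mxE mulNr.
Qed.

End Aux.


Lemma In_filter (T : Type) (p : pred T) (s : seq T) f :
  List.In f [seq c <- s | p c] -> List.In f s.
Proof. elim: s => [|y s IH] //=; case: (p y) => /= [[->|h]|h]; auto. Qed.

Lemma In_cat3 (T : Type) (L1 m L2 : seq T) f :
  List.In f (L1 ++ m ++ L2) <-> List.In f L1 \/ List.In f m \/ List.In f L2.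
Proof. by rewrite !List.in_app_iff. Qed.

Lemma inpoly_cons (R : realType) (n : nat) (a : 'rV[R]_n) d P x :
  inpoly ((a, d) :: P) x = (dot a x <= d) && inpoly P x.
Proof. by []. Qed.

Unset Implicit Arguments.

Theorem mainTheorem9 (R : realType) (n : nat) (E : lexpr R n) (L L' : seq (entry R n)) :
  valid E L ->
  (split_step E L L' \/ tighten_step E L L') ->
  forall x : 'rV[R]_n,
    (Alo L x <= Alo L' x)%E /\ (Ahi L' x <= Ahi L x)%E /\
    (Alo L' x <= (lsem E x)%:E)%E /\ ((lsem E x)%:E <= Ahi L' x)%E.
Proof.
move=> vL [[exL [L1 [L2 [e [a [d [HL HL']]]]]]] | [L1 [L2 [e [e' [HL [HL' [Hc He]]]]]]]] x.
- set c1 := exact_entry E ((a, d) :: cons e).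
  set c2 := exact_entry E ((- a, - d) :: cons e).
  have inL' f : List.In f L1 \/ List.In f L2 -> List.In f L'.
    by move=> h; rewrite HL' In_cat3; case: h; auto.
  have inL f : List.In f L1 \/ List.In f L2 -> List.In f L.
    by move=> h; rewrite HL -cat1s In_cat3; case: h; auto.
  have eL : List.In e L by rewrite HL -cat1s In_cat3; simpl; auto.
  have sub1 : poly_set (cons c1) `<=` poly_set (cons e).
    by move=> y; rewrite /poly_set /= => /andP[].
  have sub2 : poly_set (cons c2) `<=` poly_set (cons e).
    by move=> y; rewrite /poly_set /= => /andP[].
  have child f : List.In f L' -> inpoly (cons f) x ->
      List.In f L1 \/ List.In f L2 \/ (f = c1 \/ f = c2).
    move=> hf _; move: hf; rewrite HL' => /In_cat3 [hf|[hf|hf]]; auto.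
    have := In_filter hf; move=> /= [h|[h|[]]]; [right; right; left|right; right; right];
      by rewrite -h.
  have key : inpoly (cons e) x -> exists f, [/\ List.In f L', inpoly (cons f) x,
      (lo e <= lo f)%E & (hi f <= hi e)%E].
    move=> hx; have [lo_e hi_e] := exL e eL.
    have [hd|hd] := leP (dot a x) d.
    + have hx1 : inpoly (cons c1) x by rewrite /= hd hx.
      exists c1; split => //.
      * rewrite HL' In_cat3; right; left => /=.
        by rewrite asboolT /=; [left | exists x].
      * by rewrite lo_e /c1 /=; have [] := bnds_mono sub1 E.
      * by rewrite hi_e /c1 /=; have [] := bnds_mono sub1 E.
    + have hx2 : inpoly (cons c2) x.
        by rewrite /= dotN lerN2 (ltW hd) hx.
      exists c2; split => //.
      * rewrite HL' In_cat3; right; left => /=.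
        case: (asboolP (poly_set (cons c1) !=set0)) => _ /=;
          rewrite asboolT /=; try (by right; left); try (by left);
          by exists x.
      * by rewrite lo_e /c2 /=; have [] := bnds_mono sub2 E.
      * by rewrite hi_e /c2 /=; have [] := bnds_mono sub2 E.
  have soundL f : List.In f L -> inpoly (cons f) x ->
      (lo f <= (lsem E x)%:E)%E /\ ((lsem E x)%:E <= hi f)%E.
    move=> hf hx; have [_ [h1 h2]] := vL f hf; split.
      by apply: le_trans h1 _; apply: ereal_inf_lbound; exists x.
    by apply: le_trans h2; apply: ereal_sup_ubound; exists x.
  have soundL' f : List.In f L' -> inpoly (cons f) x ->
      (lo f <= (lsem E x)%:E)%E /\ ((lsem E x)%:E <= hi f)%E.
    move=> hf hx; case: (child f hf hx) => [h|[h|[E1|E1]]]; try subst f.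
    + by apply: soundL => //; apply: inL; auto.
    + by apply: soundL => //; apply: inL; auto.
    + exact: (@bnds_sound _ _ (poly_set (cons c1)) x hx E).
    + exact: (@bnds_sound _ _ (poly_set (cons c2)) x hx E).
  split; [|split; [|split]].
  + apply: Alo_ub => f; rewrite {1}HL -cat1s => /In_cat3 [h|[[<-|[]]|h]] hx.
    * by apply: Alo_lb => //; apply: inL'; auto.
    * have [g [hg hgx h1 _]] := key hx; apply: le_trans h1 _; exact: Alo_lb.
    * by apply: Alo_lb => //; apply: inL'; auto.
  + apply: Ahi_lb => f; rewrite {1}HL -cat1s => /In_cat3 [h|[[<-|[]]|h]] hx.
    * by apply: Ahi_ub => //; apply: inL'; auto.
    * have [g [hg hgx _ h1]] := key hx; apply: le_trans h1; exact: Ahi_ub.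
    * by apply: Ahi_ub => //; apply: inL'; auto.
  + by apply: Alo_ub => f hf hx; have [] := soundL' f hf hx.
  + by apply: Ahi_lb => f hf hx; have [] := soundL' f hf hx.
- have inL' f : List.In f L1 \/ List.In f L2 -> List.In f L'.
    by move=> h; rewrite HL' -cat1s In_cat3; case: h; auto.
  have inL f : List.In f L1 \/ List.In f L2 -> List.In f L.
    by move=> h; rewrite HL -cat1s In_cat3; case: h; auto.
  have eL : List.In e L by rewrite HL -cat1s In_cat3; simpl; auto.
  have e'L : List.In e' L' by rewrite HL' -cat1s In_cat3; simpl; auto.
  have soundL f : List.In f L -> inpoly (cons f) x ->
      (lo f <= (lsem E x)%:E)%E /\ ((lsem E x)%:E <= hi f)%E.
    move=> hf hx; have [_ [h1 h2]] := vL f hf; split.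
      by apply: le_trans h1 _; apply: ereal_inf_lbound; exists x.
    by apply: le_trans h2; apply: ereal_sup_ubound; exists x.
  have [lo_le hi_le] : (lo e <= lo e')%E /\ (hi e' <= hi e)%E.
    by case: He => [[-> [? _]]|[-> [? _]]].
  have soundL' f : List.In f L' -> inpoly (cons f) x ->
      (lo f <= (lsem E x)%:E)%E /\ ((lsem E x)%:E <= hi f)%E.
    move=> hf hx; move: hf; rewrite HL' -cat1s => /In_cat3 [h|[[E1|[]]|h]]; try subst f.
    + by apply: soundL => //; apply: inL; auto.
    + rewrite Hc in hx; have [s1 s2] := soundL e eL hx.
      case: He => [[-> [_ h]]|[-> [_ h]]]; split => //.
        by apply: le_trans h _; apply: ereal_inf_lbound; exists x.
      by apply: le_trans h; apply: ereal_sup_ubound; exists x.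
    + by apply: soundL => //; apply: inL; auto.
  split; [|split; [|split]].
  + apply: Alo_ub => f; rewrite {1}HL -cat1s => /In_cat3 [h|[[<-|[]]|h]] hx.
    * by apply: Alo_lb => //; apply: inL'; auto.
    * by apply: le_trans lo_le _; apply: Alo_lb => //; rewrite Hc.
    * by apply: Alo_lb => //; apply: inL'; auto.
  + apply: Ahi_lb => f; rewrite {1}HL -cat1s => /In_cat3 [h|[[<-|[]]|h]] hx.
    * by apply: Ahi_ub => //; apply: inL'; auto.
    * by apply: le_trans hi_le; apply: Ahi_ub => //; rewrite Hc.
    * by apply: Ahi_ub => //; apply: inL'; auto.
  + by apply: Alo_ub => f hf hx; have [] := soundL' f hf hx.
  + by apply: Ahi_lb => f hf hx; have [] := soundL' f hf hx.
Qed.
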